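(* Let $\mathcal{H}$ be a Hilbert space and $n\in\mathbb{N}$. Suppose bounded operators on $\mathcal{H}$ satisfy Assumptions 1–4 of the context, and let $K,L_i,S_{ij}$ be defined as in the context. Then $$K+K^\dagger=-L_i^\dagger L_i,\qquad S_{il}S_{jl}^\dagger=\delta_{ij}P_0,\qquad S_{li}^\dagger S_{lj}=\delta_{ij}P_0$$ for all $i,j\in\{1,\dots,n\}$.
   Context: Repeated indices not inside parentheses are summed over $\{1,\dots,n\}$; $\dagger$ denotes the adjoint; all operators are bounded on $\mathcal{H}$. Assumption 1: for each $k\ge0$, $K^{(k)}+K^{(k)\dagger}=-L^{(k)\dagger}_iL^{(k)}_i$, $S^{(k)}_{il}S^{(k)\dagger}_{jl}=\delta_{ij}I$, $S^{(k)\dagger}_{li}S^{(k)}_{lj}=\delta_{ij}I$. Assumption 2: there are bounded operators $Y,A,B,F_i,G_i,W_{ij}$, independent of $k$, with $K^{(k)}=k^2Y+kA+B$, $L^{(k)}_i=kF_i+G_i$, $S^{(k)}_{ij}=W_{ij}$ for all $k\ge0$. Let $P_0$ be the orthogonal projection onto $\mathrm{Ker}(Y)$ and $P_1=I-P_0$. Assumption 3: there is a bounded operator $Y_1^{-1}$ on $\mathcal{H}$ with $P_1Y_1^{-1}=Y_1^{-1}P_1$, such that $YY_1^{-1}P_1ZP_0=P_1ZP_0$ for $Z\in\{A\}\cup\{F_i^\dagger W_{ij}:j=1,\dots,n\}$, and $P_0XP_1Y_1^{-1}Y=P_0XP_1$ for every $X$ among $A,B,F_i,G_i,W_{ij},G_i^\dagger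 W_{ij},F_iY_1^{-1}F_j,F_iY_1^{-1}A,F_iY_1^{-1}F_l^\dagger W_{lj},AY_1^{-1}A,AY_1^{-1}F_i,AY_1^{-1}F_l^\dagger W_{lj}$; moreover $P_0YP_1=0$, $P_0AP_0=0$, $F_iP_0=0$ and $P_0(\delta_{il}+F_iY_1^{-1}F_l^\dagger)W_{lj}P_1=0$ for all $i,j$. Define $K=P_0(B-AY_1^{-1}A)P_0$, $L_i=(G_i-F_iY_1^{-1}A)P_0$, $S_{ij}=(\delta_{il}+F_iY_1^{-1}F_l^\dagger)W_{lj}P_0$. Assumption 4: $P_1L_i=0$ and $P_1S_{ij}=0$ for all $i,j$. *)

(* Defs.v *)
From mathcomp Require Import all_boot all_algebra.
From mathcomp Require Import reals complex functions.
From Stdlib Require Import ClassicalEpsilon.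
Set Implicit Arguments. Unset Strict Implicit. Unset Printing Implicit Defensive.
Import GRing.Theory Num.Theory.
Local Open Scope ring_scope.

Section Hilbert.
Variable R : realType.
Variable H : lmodType R[i].
Variable ip : H -> H -> R[i].

Definition is_inner_product : Prop :=
  [/\ (forall (a : R[i]) (x1 x2 y : H), ip (a *: x1 + x2) y = a * ip x1 y + ip x2 y),
      (forall x y, ip x y = (ip y x)^*),
      (forall x, 0 <= ip x x) &
      (forall x, ip x x = 0 -> x = 0)].

Definition hnorm (x : H) : R := Num.sqrt (complex.Re (ip x x)).

Definition hcomplete : Prop :=
  forall u : nat -> H,
    (forall e : R, 0 < e -> exists N : nat, forall m n : nat,
        (N <= m)%N -> (N <= n)%N -> hnorm (u m - u n) < e) ->
    exists l : H, forall e : R, 0 < e -> exists N : nat, forall n : nat,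
        (N <= n)%N -> hnorm (u n - l) < e.

Definition is_hilbert : Prop := is_inner_product /\ hcomplete.

Definition bounded_op (T : H -> H) : Prop :=
  (forall (a : R[i]) (x y : H), T (a *: x + y) = a *: T x + T y) /\
  exists M : R, forall x, hnorm (T x) <= M * hnorm x.

Definition is_adjoint (T Td : H -> H) : Prop :=
  forall x y, ip (T x) y = ip x (Td y).

(* the adjoint T^dagger (chosen; unique in a Hilbert space) *)
Definition adj (T : H -> H) : H -> H :=
  epsilon (inhabits (fun x : H => x)) (is_adjoint T).

Definition orth_proj_onto (P : H -> H) (M : H -> Prop) : Prop :=
  [/\ bounded_op P,
      (forall x, M (P x)) &
      (forall x y, M y -> ip (x - P x) y = 0)].

Definition kerop (T : H -> H) : H -> Prop := fun x => T x = 0.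

End Hilbert.

(* Main.v *)
Require Import Defs.
From mathcomp Require Import all_boot all_algebra.
From mathcomp Require Import reals complex functions.
From mathcomp Require Import ring.
From Stdlib Require Import ClassicalEpsilon FunctionalExtensionality.
Import GRing.Theory Num.Theory.
Set Implicit Arguments. Unset Strict Implicit.
Local Open Scope ring_scope.

Section Aux.
Variable R : realType.
Variable H : lmodType R[i].
Variable ip : H -> H -> R[i].
Hypothesis hip : is_inner_product ip.

Lemma ipDZl a x y z : ip (a *: x + y) z = a * ip x z + ip y z.
Proof. by case: hip. Qed.
Lemma ipC x y : ip x y = (ip y x)^*.
Proof. by case: hip. Qed.
Lemma ip0l z : ip 0 z = 0.
Proof.
have := ipDZl 1 0 0 z; rewrite scaler0 addr0 mul1r => h.
by apply/(addrI (ip 0 z)); rewrite -h addr0.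
Qed.
Lemma ipDl x y z : ip (x + y) z = ip x z + ip y z.
Proof. by rewrite -[x]scale1r ipDZl mul1r scale1r. Qed.
Lemma ipZl a x z : ip (a *: x) z = a * ip x z.
Proof. by rewrite -[a *: x]addr0 ipDZl ip0l addr0. Qed.
Lemma ipNl x z : ip (- x) z = - ip x z.
Proof. by rewrite -scaleN1r ipZl mulN1r. Qed.
Lemma ipBl x y z : ip (x - y) z = ip x z - ip y z.
Proof. by rewrite ipDl ipNl. Qed.
Lemma ip_suml (I : Type) (r : seq I) (P : pred I) (f : I -> H) z :
  ip (\sum_(i <- r | P i) f i) z = \sum_(i <- r | P i) ip (f i) z.
Proof. by apply: (big_morph (fun x => ip x z)); [move=> ??; apply: ipDl| apply: ip0l]. Qed.
Lemma ipDr x y z : ip z (x + y) = ip z x + ip z y.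
Proof. by rewrite ipC ipDl rmorphD /= -!ipC. Qed.
Lemma ipZr a x z : ip z (a *: x) = a^* * ip z x.
Proof. by rewrite ipC ipZl rmorphM /= -ipC. Qed.
Lemma ip0r z : ip z 0 = 0.
Proof. by rewrite ipC ip0l rmorph0. Qed.
Lemma ipNr x z : ip z (- x) = - ip z x.
Proof. by rewrite ipC ipNl rmorphN /= -ipC. Qed.
Lemma ipBr x y z : ip z (x - y) = ip z x - ip z y.
Proof. by rewrite ipDr ipNr. Qed.
Lemma ip_sumr (I : Type) (r : seq I) (P : pred I) (f : I -> H) z :
  ip z (\sum_(i <- r | P i) f i) = \sum_(i <- r | P i) ip z (f i).
Proof. by apply: (big_morph (fun x => ip z x)); [move=> ??; apply: ipDr| apply: ip0r]. Qed.

Lemma ip_eq x y : (forall z, ip x z = ip y z) -> x = y.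
Proof.
move=> h; apply/eqP; rewrite -subr_eq0; apply/eqP.
case: hip => _ _ _; apply; by rewrite ipBl h subrr.
Qed.
Lemma ip_eqr x y : (forall z, ip z x = ip z y) -> x = y.
Proof. by move=> h; apply: ip_eq => z; rewrite ipC h -ipC. Qed.

Definition hasadj (T : H -> H) := exists D, is_adjoint ip T D.

Lemma adjP T : hasadj T -> is_adjoint ip T (adj ip T).
Proof. by move=> h; rewrite /adj; apply: epsilon_spec. Qed.

Lemma adj_eq T D : is_adjoint ip T D -> adj ip T = D.
Proof.
move=> hD; have hA := @adjP T (ex_intro _ D hD).
apply: functional_extensionality => y; apply: ip_eqr => z.
by rewrite -hA hD.
Qed.

Lemma adj_sym T D : is_adjoint ip T D -> is_adjoint ip D T.
Proof. by move=> h x y; rewrite ipC -h -ipC. Qed.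

Lemma adj_ip T : hasadj T -> forall y z, ip (adj ip T y) z = ip y (T z).
Proof. by move=> h y z; exact: (adj_sym (adjP h) y z). Qed.

Definition lin (T : H -> H) := forall a x y, T (a *: x + y) = a *: T x + T y.

Lemma adj_lin T D : is_adjoint ip T D -> lin T.
Proof.
move=> h a x y; apply: ip_eq => z.
by rewrite h ipDZl ipDZl !h.
Qed.
Lemma hasadj_lin T : hasadj T -> lin T.
Proof. by case=> D; apply: adj_lin. Qed.

Lemma lin0 T : lin T -> T 0 = 0.
Proof.
move=> h; have := h 1 0 0; rewrite !scale1r addr0 => e.
by apply/(addrI (T 0)); rewrite -e addr0.
Qed.
Lemma linD T : lin T -> forall x y, T (x + y) = T x + T y.
Proof. by move=> h x y; rewrite -[x]scale1r h !scale1r. Qed.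
Lemma linZ T : lin T -> forall a x, T (a *: x) = a *: T x.
Proof. by move=> h a x; rewrite -[a *: x]addr0 h lin0 // addr0. Qed.
Lemma linN T : lin T -> forall x, T (- x) = - T x.
Proof. by move=> h x; rewrite -scaleN1r linZ // scaleN1r. Qed.
Lemma linB T : lin T -> forall x y, T (x - y) = T x - T y.
Proof. by move=> h x y; rewrite linD // linN. Qed.
Lemma lin_sum T : lin T -> forall (I : Type) (r : seq I) (P : pred I) (f : I -> H),
  T (\sum_(i <- r | P i) f i) = \sum_(i <- r | P i) T (f i).
Proof. by move=> h I r P f; apply: (big_morph T); [apply: linD | apply: lin0]. Qed.

Lemma adj_comp S S' T T' : is_adjoint ip S S' -> is_adjoint ip T T' ->
  is_adjoint ip (S \o T) (T' \o S').
Proof. by move=> hS hT x y /=; rewrite hS hT. Qed.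
Lemma adj_add S S' T T' : is_adjoint ip S S' -> is_adjoint ip T T' ->
  is_adjoint ip (S + T) (S' + T').
Proof. by move=> hS hT x y /=; rewrite ipDl ipDr hS hT. Qed.
Lemma adj_sub S S' T T' : is_adjoint ip S S' -> is_adjoint ip T T' ->
  is_adjoint ip (S - T) (S' - T').
Proof. by move=> hS hT x y /=; rewrite ipBl ipBr hS hT. Qed.
Lemma adj_scale a S S' : is_adjoint ip S S' -> is_adjoint ip (a *: S) (a^* *: S').
Proof. by move=> hS x y /=; rewrite ipZl ipZr conjCK hS. Qed.
Lemma adj_id : is_adjoint ip idfun idfun.
Proof. by []. Qed.
Lemma adj_sum (I : Type) (r : seq I) (P : pred I) (f g : I -> H -> H) :
  (forall i, P i -> is_adjoint ip (f i) (g i)) ->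
  is_adjoint ip (\sum_(i <- r | P i) f i) (\sum_(i <- r | P i) g i).
Proof.
move=> h; apply: (big_ind2 (fun a b => is_adjoint ip a b)) => //.
- by move=> x y /=; rewrite ip0l ip0r.
- by move=> ????; apply: adj_add.
Qed.

Lemma hasadj_comp S T : hasadj S -> hasadj T -> hasadj (S \o T).
Proof. by move=> [S' hS] [T' hT]; exists (T' \o S'); apply: adj_comp. Qed.
Lemma hasadj_add S T : hasadj S -> hasadj T -> hasadj (S + T).
Proof. by move=> [S' hS] [T' hT]; exists (S' + T'); apply: adj_add. Qed.
Lemma hasadj_sub S T : hasadj S -> hasadj T -> hasadj (S - T).
Proof. by move=> [S' hS] [T' hT]; exists (S' - T'); apply: adj_sub. Qed.
Lemma hasadj_opp S : hasadj S -> hasadj (- S).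
Proof. by move=> [S' hS]; exists (- S') => x y /=; rewrite ipNl ipNr hS. Qed.
Lemma hasadj_scale a S : hasadj S -> hasadj (a *: S).
Proof. by move=> [S' hS]; exists (a^* *: S'); apply: adj_scale. Qed.
Lemma hasadj_id : hasadj idfun.
Proof. by exists idfun. Qed.
Lemma hasadj_adj T : hasadj T -> hasadj (adj ip T).
Proof. by move=> h; exists T; apply: adj_sym; apply: adjP. Qed.
Lemma hasadj_sum (I : Type) (r : seq I) (P : pred I) (f : I -> H -> H) :
  (forall i, hasadj (f i)) -> hasadj (\sum_(i <- r | P i) f i).
Proof.
move=> h; apply: (big_ind (fun a => hasadj a)) => //.
- by exists 0 => x y /=; rewrite ip0l ip0r.
- by move=> ??; apply: hasadj_add.
Qed.

End Aux.

Lemma fadd (R : realType) (H : lmodType R[i]) (f g : H -> H) x : (f + g) x = f x + g x.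
Proof. by []. Qed.
Lemma fsub (R : realType) (H : lmodType R[i]) (f g : H -> H) x : (f - g) x = f x - g x.
Proof. by []. Qed.
Lemma fopp (R : realType) (H : lmodType R[i]) (f : H -> H) x : (- f) x = - f x.
Proof. by []. Qed.
Lemma fscale (R : realType) (H : lmodType R[i]) a (f : H -> H) x : (a *: f) x = a *: f x.
Proof. by []. Qed.
Lemma fsum (R : realType) (H : lmodType R[i]) (I : Type) (r : seq I) (P : pred I) (f : I -> H -> H) x :
  (\sum_(i <- r | P i) f i) x = \sum_(i <- r | P i) f i x.
Proof. by rewrite fct_sumE. Qed.
Lemma fzero (R : realType) (H : lmodType R[i]) x : (0 : H -> H) x = 0.
Proof. by []. Qed.

Ltac hadj hip :=
  repeat match goal with
  | |- hasadj _ (_ + _) => apply: (hasadj_add hip)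
  | |- hasadj _ (_ - _) => apply: (hasadj_sub hip)
  | |- hasadj _ (- _) => apply: (hasadj_opp hip)
  | |- hasadj _ (_ *: _) => apply: (hasadj_scale hip)
  | |- hasadj _ (_ \o _) => apply: hasadj_comp
  | |- hasadj _ (\sum_(_ <- _ | _) _) => apply: (hasadj_sum hip) => ?
  | |- hasadj _ idfun => apply: hasadj_id
  | |- hasadj _ (adj _ _) => apply: (hasadj_adj hip)
  | H : forall i j, hasadj _ (?f i j) |- hasadj _ (?f _ _) => apply: H
  | H : forall i, hasadj _ (?f i) |- hasadj _ (?f _) => apply: H
  | H : hasadj _ ?f |- hasadj _ ?f => exact: H
  | |- hasadj _ ((fun _ => _) _) => progress simpl
  end.
Lemma fcomp (R : realType) (H : lmodType R[i]) (f g : H -> H) x : (f \o g) x = f (g x).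
Proof. by []. Qed.
Lemma solve3 (V : zmodType) (a b s : V) : a + b + s = 0 -> s = - a - b.
Proof. by move=> h; rewrite -[s](addKr (a + b)) h addr0 opprD. Qed.
Lemma dsumv (R : realType) (H : lmodType R[i]) n (l : 'I_n) (v : 'I_n -> H) :
  \sum_(m < n) (l == m)%:R *: v m = v l.
Proof.
rewrite (bigD1 l) //= eqxx scale1r big1 ?addr0 // => m.
by rewrite eq_sym => /negbTE ->; rewrite scale0r.
Qed.
Lemma dsum (R : realType) n (l : 'I_n) (v : 'I_n -> R[i]) :
  \sum_(m < n) (l == m)%:R * v m = v l.
Proof.
rewrite (bigD1 l) //= eqxx mul1r big1 ?addr0 // => m.
by rewrite eq_sym => /negbTE ->; rewrite mul0r.
Qed.

Theorem lemma2p5 (R : realType) (H : lmodType R[i]) (ip : H -> H -> R[i])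
  (n : nat)
  (Y A B : H -> H) (F G : 'I_n -> H -> H) (W : 'I_n -> 'I_n -> H -> H)
  (P0 Y1 : H -> H) :
  (* H is a Hilbert space; every bounded operator on H has an adjoint *)
  is_hilbert ip ->
  (forall T, bounded_op ip T -> exists Td, is_adjoint ip T Td) ->
  (* all the given operators are bounded *)
  bounded_op ip Y -> bounded_op ip A -> bounded_op ip B ->
  (forall i, bounded_op ip (F i)) -> (forall i, bounded_op ip (G i)) ->
  (forall i j, bounded_op ip (W i j)) -> bounded_op ip Y1 ->
  (* P0 is the orthogonal projection onto Ker Y *)
  orth_proj_onto ip P0 (kerop Y) ->
  let P1 := idfun - P0 in
  (* Assumptions 1 and 2: K^(k) = k^2 Y + k A + B, L^(k)_i = k F_i + G_i, S^(k) = W *)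
  (forall k : R, 0 <= k ->
     let Kk := ((k ^+ 2)%:C)%C *: Y + (k%:C)%C *: A + B in
     let Lk := fun i => (k%:C)%C *: F i + G i in
     [/\ Kk + adj ip Kk = - \sum_(i < n) (adj ip (Lk i) \o Lk i),
         (forall i j, \sum_(l < n) (W i l \o adj ip (W j l))
                      = (i == j)%:R *: idfun) &
         (forall i j, \sum_(l < n) (adj ip (W l i) \o W l j)
                      = (i == j)%:R *: idfun)]) ->
  (* Assumption 3 *)
  (P1 \o Y1 = Y1 \o P1) ->
  (Y \o Y1 \o P1 \o A \o P0 = P1 \o A \o P0) ->
  (forall j, Y \o Y1 \o P1 \o (\sum_(i < n) (adj ip (F i) \o W i j)) \o P0
             = P1 \o (\sum_(i < n) (adj ip (F i) \o W i j)) \o P0) ->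
  (forall X : H -> H,
     (X = A \/ X = B \/ (exists i, X = F i) \/ (exists i, X = G i) \/
      (exists i j, X = W i j) \/
      (exists j, X = \sum_(i < n) (adj ip (G i) \o W i j)) \/
      (exists i j, X = F i \o Y1 \o F j) \/
      (exists i, X = F i \o Y1 \o A) \/
      (exists i j, X = \sum_(l < n) (F i \o Y1 \o adj ip (F l) \o W l j)) \/
      X = A \o Y1 \o A \/
      (exists i, X = A \o Y1 \o F i) \/
      (exists j, X = \sum_(l < n) (A \o Y1 \o adj ip (F l) \o W l j))) ->
     P0 \o X \o P1 \o Y1 \o Y = P0 \o X \o P1) ->
  P0 \o Y \o P1 = 0 ->
  P0 \o A \o P0 = 0 ->
  (forall i, F i \o P0 = 0) ->
  (forall i j, P0 \o (\sum_(l < n) (((i == l)%:R *: idfun + (F i \o Y1 \o adj ip (F l)))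
                                   \o W l j)) \o P1 = 0) ->
  (* definitions of K, L_i, S_ij *)
  let K := P0 \o (B - (A \o Y1 \o A)) \o P0 in
  let L := fun i => (G i - (F i \o Y1 \o A)) \o P0 in
  let S := fun i j => \sum_(l < n) (((i == l)%:R *: idfun + (F i \o Y1 \o adj ip (F l)))
                                   \o W l j) \o P0 in
  (* Assumption 4 *)
  (forall i, P1 \o L i = 0) ->
  (forall i j, P1 \o S i j = 0) ->
  (* conclusion *)
  [/\ K + adj ip K = - \sum_(i < n) (adj ip (L i) \o L i),
      (forall i j, \sum_(l < n) (S i l \o adj ip (S j l)) = (i == j)%:R *: P0) &
      (forall i j, \sum_(l < n) (adj ip (S l i) \o S l j) = (i == j)%:R *: P0)].
Proof.
move=> [hip hcomp] hadjex bY bA bB bF bG bW bY1 hP0 P1 hK hY1c hA3 hV3 hX3 hPYP hPAP hFP hPTWP K L S hL4 hS4.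
have ha : forall T, bounded_op ip T -> hasadj ip T := fun T b => hadjex T b.
have aY := ha _ bY; have aA := ha _ bA; have aB := ha _ bB; have aY1 := ha _ bY1.
have aF : forall i, hasadj ip (F i) := fun i => ha _ (bF i).
have aG : forall i, hasadj ip (G i) := fun i => ha _ (bG i).
have aW : forall i j, hasadj ip (W i j) := fun i j => ha _ (bW i j).
case: hP0 => bP0 hM hOrth.
have lP0 := hasadj_lin hip (ha _ bP0).
have P0M : forall y, Y y = 0 -> P0 y = y.
  move=> y hy; have h0 : y - P0 y = 0.
    case: (hip) => _ _ _; apply.
    by rewrite (ipBr hip) hOrth // hOrth ?subrr //; apply: hM.
  by apply/eqP; rewrite eq_sym -subr_eq0 h0.
have P0P0 : forall x, P0 (P0 x) = P0 x := fun x => P0M _ (hM x).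
have orth' : forall u v, ip (P0 u) (v - P0 v) = 0.
  by move=> u v; rewrite (ipC hip) hOrth ?rmorph0 //; apply: hM.
have e1 : forall u v, ip (P0 u) v = ip (P0 u) (P0 v).
  by move=> u v; have := orth' u v; rewrite (ipBr hip) => /eqP; rewrite subr_eq0 => /eqP ->.
have e2 : forall u v, ip u (P0 v) = ip (P0 u) (P0 v).
  by move=> u v; have := hOrth u (P0 v) (hM v); rewrite (ipBl hip) => /eqP; rewrite subr_eq0 => /eqP ->.
have aP0 : is_adjoint ip P0 P0 by move=> x y; rewrite e1 [RHS]e2.
have P1E : forall v, P1 v = v - P0 v by [].
have Epoly : forall k : R, 0 <= k -> forall u w,
  (k%:C)%C ^+ 2 * (ip (Y u) w + ip u (Y w) + \sum_(i < n) ip (F i u) (F i w))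
  + (k%:C)%C * (ip (A u) w + ip u (A w) + \sum_(i < n) (ip (G i u) (F i w) + ip (F i u) (G i w)))
  + (ip (B u) w + ip u (B w) + \sum_(i < n) ip (G i u) (G i w)) = 0.
  move=> k hk u w.
  have [h1 _ _] := hK k hk.
  have cc : ((k%:C)%C)^* = (k%:C)%C by exact: conjc_real.
  have cc2 : (((k ^+ 2)%:C)%C)^* = ((k ^+ 2)%:C)%C by exact: conjc_real.
  have hK' : hasadj ip ((k ^+ 2)%:C%C *: Y + (k%:C)%C *: A + B) by hadj hip.
  have hL' : forall i, hasadj ip ((k%:C)%C *: F i + G i) by move=> i; hadj hip.
  have := congr1 (fun f => ip (f u) w) h1.
  rewrite /= fadd (ipDl hip) (adj_ip hip hK') fopp fsum (ipNl hip) (ip_suml hip).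
  have sE : forall i, ip ((adj ip ((k%:C)%C *: F i + G i) \o ((k%:C)%C *: F i + G i)) u) w
     = (k%:C)%C ^+ 2 * ip (F i u) (F i w) + (k%:C)%C * (ip (G i u) (F i w) + ip (F i u) (G i w)) + ip (G i u) (G i w).
    move=> i; rewrite fcomp (adj_ip hip (hL' i)) !fadd !fscale !(ipDl hip) !(ipDr hip) !(ipZl hip) !(ipZr hip) cc.
    ring.
  move=> E; rewrite (eq_bigr _ (fun i _ => sE i)) in E.
  rewrite big_split big_split /= -!mulr_sumr in E.
  rewrite !fadd !fscale !(ipDl hip) !(ipDr hip) !(ipZl hip) !(ipZr hip) cc cc2 rmorphXn in E.
  move/eqP: E; rewrite -subr_eq0 => /eqP E.
  rewrite -[X in _ = X]E; ring.
have Ez : forall u w,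
  [/\ ip (Y u) w + ip u (Y w) + \sum_(i < n) ip (F i u) (F i w) = 0,
      ip (A u) w + ip u (A w) + \sum_(i < n) (ip (G i u) (F i w) + ip (F i u) (G i w)) = 0 &
      ip (B u) w + ip u (B w) + \sum_(i < n) ip (G i u) (G i w) = 0].
  move=> u w.
  move: (Epoly 0 (order.Order.POrderTheory.lexx (0:R)) u w) (Epoly 1 ler01 u w) (Epoly 2%:R (ler0n _ 2) u w).
  rewrite !rmorph0 !rmorph1 rmorph_nat.
  move: (ip (Y u) w + ip u (Y w) + \sum_(i < n) ip (F i u) (F i w)) => a.
  move: (ip (A u) w + ip u (A w) + \sum_(i < n) (ip (G i u) (F i w) + ip (F i u) (G i w))) => b.
  move: (ip (B u) w + ip u (B w) + \sum_(i < n) ip (G i u) (G i w)) => c.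
  move=> h0 h1 h2.
  have hc : c = 0 by rewrite -h0; ring.
  have e : 2%:R * a = (2%:R ^+ 2 * a + 2%:R * b + c) - 2%:R * (1 ^+ 2 * a + 1 * b + c) + (0 ^+ 2 * a + 0 * b + c) by ring.
  rewrite h0 h1 h2 mulr0 subrr addr0 in e.
  have ha0 : a = 0 by move/eqP: e; rewrite mulf_eq0 pnatr_eq0 /= => /eqP.
  split => //.
  by rewrite -h1 ha0 hc; ring.
have E2 : forall u w, \sum_(i < n) ip (F i u) (F i w) = - ip (Y u) w - ip u (Y w).
  by move=> u w; case: (Ez u w) => h _ _; apply: solve3.
have E1 : forall u w, \sum_(i < n) (ip (G i u) (F i w) + ip (F i u) (G i w)) = - ip (A u) w - ip u (A w).
  by move=> u w; case: (Ez u w) => _ h _; apply: solve3.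
have E0 : forall u w, \sum_(i < n) ip (G i u) (G i w) = - ip (B u) w - ip u (B w).
  by move=> u w; case: (Ez u w) => _ _ h; apply: solve3.
have [_ hWW hWdW] := hK 0 (order.Order.POrderTheory.lexx (0:R)).
have WW : forall i j x, \sum_(l < n) W i l (adj ip (W j l) x) = (i == j)%:R *: x.
  by move=> i j x; have := congr1 (fun f => f x) (hWW i j); rewrite fsum.
have WdW : forall i j x, \sum_(l < n) adj ip (W l i) (W l j x) = (i == j)%:R *: x.
  by move=> i j x; have := congr1 (fun f => f x) (hWdW i j); rewrite fsum.
have F0 : forall i x, F i (P0 x) = 0 by move=> i x; exact: (congr1 (fun f => f x) (hFP i)).
have PAP : forall x, P0 (A (P0 x)) = 0 by move=> x; exact: (congr1 (fun f => f x) hPAP).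
have aP0' : hasadj ip P0 by exists P0.
have PFd : forall i y, P0 (adj ip (F i) y) = 0.
  move=> i y; apply: (ip_eq hip) => z.
  by rewrite aP0 (adj_ip hip (aF i)) F0 (ip0r hip) (ip0l hip).
have YA : forall x, Y (Y1 (A (P0 x))) = A (P0 x).
  move=> x; have := congr1 (fun f => f x) hA3; rewrite /= !P1E PAP subr0.
  by [].
have E1a : forall x w, \sum_(i < n) ip (G i (P0 x)) (F i w) = - ip (A (P0 x)) w - ip (P0 x) (A w).
  move=> x w; rewrite -E1; apply: eq_bigr => i _.
  by rewrite F0 (ip0l hip) addr0.
have E1b : forall u z, \sum_(i < n) ip (F i u) (G i (P0 z)) = - ip (A u) (P0 z) - ip u (A (P0 z)).
  move=> u z; rewrite -E1; apply: eq_bigr => i _.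
  by rewrite F0 (ip0r hip) add0r.
have part2 : K + adj ip K = - \sum_(i < n) (adj ip (L i) \o L i).
  apply: functional_extensionality => x; apply: (ip_eq hip) => z.
  have hKa : hasadj ip K by rewrite /K; hadj hip.
  have hLa : forall i, hasadj ip (L i) by move=> i; rewrite /L; hadj hip.
  have sL : forall i, ip ((adj ip (L i) \o L i) x) z =
     ip (G i (P0 x)) (G i (P0 z)) - ip (G i (P0 x)) (F i (Y1 (A (P0 z))))
     - ip (F i (Y1 (A (P0 x)))) (G i (P0 z)) + ip (F i (Y1 (A (P0 x)))) (F i (Y1 (A (P0 z)))).
    move=> i; rewrite fcomp (adj_ip hip (hLa i)) /L !fcomp !fsub !fcomp !(ipBl hip) !(ipBr hip).
    ring.
  rewrite fadd (ipDl hip) (adj_ip hip hKa) fopp fsum (ipNl hip) (ip_suml hip) (eq_bigr _ (fun i _ => sL i)).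
  rewrite big_split !sumrB /= E0 E1a E1b E2 !YA.
  rewrite /K !fcomp !fsub !fcomp (aP0 _ z) -(aP0 x) !(ipBl hip) !(ipBr hip).
  ring.
have lY1 := hasadj_lin hip aY1.
have lF : forall l, lin (F l) := fun l => hasadj_lin hip (aF l).
have SE : forall l j x, S l j x = W l j (P0 x) + F l (Y1 (\sum_(m < n) adj ip (F m) (W m j (P0 x)))).
  move=> l j x; rewrite /S fcomp fsum.
  rewrite (eq_bigr (fun m => (l == m)%:R *: W m j (P0 x) + F l (Y1 (adj ip (F m) (W m j (P0 x)))))) //.
  by rewrite big_split /= dsumv -(lin_sum (lF l)) -(lin_sum lY1).
have YV : forall j x, Y (Y1 (\sum_(m < n) adj ip (F m) (W m j (P0 x)))) = \sum_(m < n) adj ip (F m) (W m j (P0 x)).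
  move=> j x.
  have hs : P0 (\sum_(m < n) adj ip (F m) (W m j (P0 x))) = 0.
    by rewrite (lin_sum lP0) big1 // => m _; exact: PFd.
  have := congr1 (fun f => f x) (hV3 j); rewrite /= !fsum !P1E.
  by rewrite hs subr0.
have hSa : forall l j, hasadj ip (S l j) by move=> l j; rewrite /S; hadj hip.
have P0ip : forall x z, ip (P0 x) (P0 z) = ip (P0 x) z by move=> x z; rewrite -aP0 P0P0.
have part3 : forall i j, \sum_(l < n) (adj ip (S l i) \o S l j) = (i == j)%:R *: P0.
  move=> i j; apply: functional_extensionality => x; apply: (ip_eq hip) => z.
  rewrite fsum (ip_suml hip) fscale (ipZl hip).
  pose u := Y1 (\sum_(m < n) adj ip (F m) (W m j (P0 x))).
  pose u' := Y1 (\sum_(m < n) adj ip (F m) (W m i (P0 z))).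
  have sS : forall l, ip ((adj ip (S l i) \o S l j) x) z =
     ip (adj ip (W l i) (W l j (P0 x))) (P0 z) + ip (adj ip (F l) (W l j (P0 x))) u'
     + ip u (adj ip (F l) (W l i (P0 z))) + ip (F l u) (F l u').
    move=> l; rewrite fcomp (adj_ip hip (hSa l i)) !SE -/u -/u' !(ipDl hip) !(ipDr hip).
    rewrite (adj_ip hip (aW l i)) (adj_ip hip (aF l)) -(adjP (aF l) u).
    ring.
  rewrite (eq_bigr _ (fun l _ => sS l)) !big_split /= -!(ip_suml hip) -(ip_sumr hip) WdW E2.
  rewrite /u /u' !YV -/u -/u' (ipZl hip) P0ip.
  ring.
have PF : forall j w, P0 (F j (Y1 (Y w))) = P0 (F j w).
  move=> j w.
  have := congr1 (fun f => f w) (hX3 (F j) ltac:(by right; right; left; exists j)); rewrite /= !P1E !(linB (lF j)) !F0 !subr0.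
  by [].
have Q1 : forall i al z, ip (Y al) (adj ip Y1 (adj ip (F i) (P0 z))) = ip (F i al) (P0 z).
  by move=> i al z; rewrite -(adjP aY1) -(adjP (aF i)) -aP0 PF aP0.
have Q2 : forall j be x, ip (adj ip Y1 (adj ip (F j) (P0 x))) (Y be) = ip (P0 x) (F j be).
  by move=> j be x; rewrite (adj_ip hip aY1) (adj_ip hip (aF j)) aP0 PF -aP0.
have SP : forall i l y, S i l y = P0 (\sum_(m < n) ((i == m)%:R *: W m l y + F i (Y1 (adj ip (F m) (W m l y))))).
  move=> i l y.
  pose M := \sum_(m < n) (((i == m)%:R *: idfun + (F i \o Y1 \o adj ip (F m))) \o W m l).
  have MS : forall v, M v = \sum_(m < n) ((i == m)%:R *: W m l v + F i (Y1 (adj ip (F m) (W m l v)))).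
    by move=> v; rewrite /M fsum.
  have lM : lin M by apply: (hasadj_lin hip); rewrite /M; hadj hip.
  have e1s : S i l y = P0 (S i l y).
    have := congr1 (fun f => f y) (hS4 i l); rewrite fcomp fzero P1E => /eqP.
    by rewrite subr_eq0 => /eqP.
  have e2s : P0 (M (P1 y)) = 0 by exact: (congr1 (fun f => f y) (hPTWP i l)).
  have e3s : S i l y = M (P0 y) by [].
  rewrite -MS {1}e1s e3s.
  move: e2s; rewrite P1E (linB lM) (linB lP0) => /eqP; rewrite subr_eq0 => /eqP ->.
  by [].
pose D := fun i l z => \sum_(m < n) adj ip (W m l) ((i == m)%:R *: P0 z + F m (adj ip Y1 (adj ip (F i) (P0 z)))).
have aD : forall i l, is_adjoint ip (S i l) (D i l).
  move=> i l y z; rewrite SP (aP0 _ z) /D (ip_sumr hip) (ip_suml hip).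
  apply: eq_bigr => m _.
  rewrite -(adjP (aW m l)) !(ipDl hip) !(ipDr hip) !(ipZl hip) !(ipZr hip) rmorph_nat.
  by rewrite (adjP (aF i)) (adjP aY1) (adj_ip hip (aF m)).
have lW : forall a b, lin (W a b) := fun a b => hasadj_lin hip (aW a b).
have part4 : forall i j, \sum_(l < n) (S i l \o adj ip (S j l)) = (i == j)%:R *: P0.
  move=> i j; apply: functional_extensionality => x; apply: (ip_eq hip) => z.
  rewrite fsum (ip_suml hip) fscale (ipZl hip).
  pose al := adj ip Y1 (adj ip (F j) (P0 x)).
  pose be := adj ip Y1 (adj ip (F i) (P0 z)).
  pose a := fun m : 'I_n => (j == m)%:R *: P0 x + F m al.
  pose b := fun m : 'I_n => (i == m)%:R *: P0 z + F m be.
  have wsum : forall m, \sum_(l < n) W m l (D i l z) = b m.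
    move=> m.
    rewrite (eq_bigr (fun l => \sum_(m' < n) W m l (adj ip (W m' l) (b m')))); last first.
      by move=> l _; rewrite /D (lin_sum (lW m l)).
    rewrite exchange_big /= (eq_bigr (fun m' => (m == m')%:R *: b m')); last first.
      by move=> m' _; rewrite WW.
    by rewrite dsumv.
  rewrite (eq_bigr (fun l => \sum_(m < n) ip (a m) (W m l (D i l z)))); last first.
    move=> l _; rewrite fcomp (adj_eq hip (aD j l)) aD /D (ip_suml hip).
    by apply: eq_bigr => m _; rewrite (adj_ip hip (aW m l)).
  rewrite exchange_big /= (eq_bigr (fun m => ip (a m) (b m))); last first.
    by move=> m _; rewrite -(ip_sumr hip) wsum.
  have sm : forall m, ip (a m) (b m) = (j == m)%:R * ((i == m)%:R * ip (P0 x) (P0 z) + ip (P0 x) (F m be))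
      + (i == m)%:R * ip (F m al) (P0 z) + ip (F m al) (F m be).
    move=> m; rewrite /a /b !(ipDl hip) !(ipDr hip) !(ipZl hip) !(ipZr hip) !rmorph_nat.
    ring.
  rewrite (eq_bigr _ (fun m _ => sm m)) !big_split /= !dsum E2 /al /be Q1 Q2 P0ip.
  ring.
by split.
Qed.
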